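(* Let $\Gamma$ be a finite simplicial graph. If $(a,c)$ is a non-adjacent domination pair in $\Gamma$, $c$ is not isolated, and no vertex adjacent to $c$ dominates $c$, then there is a domination diamond $(a,b,c,d)$ in $\Gamma$.
   Context: For distinct vertices $x,y$, $x$ dominates $y$ ($x>y$) if every vertex adjacent to $y$ is adjacent to or equal to $x$; $(x,y)$ is a non-adjacent domination pair if moreover $x$ and $y$ are not adjacent. A vertex is isolated if it has no neighbours. A domination diamond is a quadruple $(a,b,c,d)$ of distinct vertices with $a\sim b\sim c\sim d\sim a$, $a\not\sim c$, $b\not\sim d$, and $a>c$ ($\sim$ denotes adjacency). *)

(* Defs.v *)
From mathcomp Require Import all_boot.
Set Implicit Arguments. Unset Strict Implicit. Unset Printing Implicit Defensive.

Definition simple_graph (T : finType) (e : rel T) : Prop :=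
  symmetric e /\ irreflexive e.

Definition dominates (T : finType) (e : rel T) (x y : T) : Prop :=
  x != y /\ forall z, e y z -> e x z \/ z = x.

Definition nonadj_domination_pair (T : finType) (e : rel T) (x y : T) : Prop :=
  dominates e x y /\ ~~ e x y.

Definition isolated (T : finType) (e : rel T) (v : T) : Prop :=
  forall w, ~~ e v w.

Definition domination_diamond (T : finType) (e : rel T) (a b c d : T) : Prop :=
  uniq [:: a; b; c; d] /\
  e a b /\ e b c /\ e c d /\ e d a /\ ~~ e a c /\ ~~ e b d /\
  dominates e a c.

(* Main.v *)
Require Import Defs.
From mathcomp Require Import all_boot.

Theorem lemma2p11 (T : finType) (e : rel T) (a c : T) :
  simple_graph e ->
  nonadj_domination_pair e a c ->
  ~ isolated e c ->
  (forall v, e v c -> ~ dominates e v c) ->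
  exists b d, domination_diamond e a b c d.
Proof.
move=> [sym irr] [[nac dom] nea] niso ndom.
have [/existsP [b ecb]|nb] := boolP [exists w, e c w]; last first.
  exfalso; apply: niso => w; apply/negP => H; move/negP: nb; apply.
  by apply/existsP; exists w.
have ebc : e b c by rewrite sym.
have [eab|ba] := dom b ecb; last first.
  by subst b; rewrite sym ecb in nea.
have [/existsP [d /andP [/andP [ecd nbd] ndb]]|nd] :=
  boolP [exists z, (e c z && ~~ e b z) && (z != b)]; last first.
  exfalso; apply: (ndom b ebc); split.
    by apply/eqP => E; subst b; rewrite irr in ebc.
  move=> z ecz.
  case ebz: (e b z); first by left.
  right; apply/eqP; apply/negPn/negP => H; move/negP: nd; apply.
  by apply/existsP; exists z; rewrite ecz ebz H.
have [ead|da] := dom d ecd; last first.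
  by subst d; rewrite sym ecd in nea.
exists b, d; split; last by rewrite eab ebc ecd (sym d a) ead nea nbd.
rewrite /= !inE !negb_or.
have ne : forall x y, e x y -> x != y.
  by move=> x y H; apply/eqP => E; subst y; rewrite irr in H.
rewrite (ne _ _ eab) nac (ne _ _ ead) (ne _ _ ebc) (ne _ _ ecd).
by rewrite eq_sym ndb.
Qed.
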